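(* Let $(\Delta,\mathcal H)$ be a generic cut with associated simplicial complexes $K_\Delta,K_+,K_-$ on $\widetilde{[m]}=[m]\cup\{o\}$. Then $K_\Delta$ is the strong connected sum $K_+\#^ZK_-$, where $Z=O_{K_+\cup K_-}(o)$.
   Context: Let $\Delta\subset\mathbb R^n$ be an $n$-dimensional simple polytope $\Delta=\{x:\langle x,\lambda_i\rangle+\eta_i\ge0,\ i=1,\dots,m\}$ whose facets $H_i=\Delta\cap\{\langle x,\lambda_i\rangle+\eta_i=0\}$ are all nonempty. A generic cut is a hyperplane $\mathcal H=\{\langle x,\lambda_0\rangle+\xi=0\}$ in general position with the hyperplanes $\{\langle x,\lambda_i\rangle+\eta_i=0\}$ and with $H_o:=\mathcal H\cap\Delta\neq\varnothing$. Set $\Delta_\pm=\Delta\cap\{\pm(\langle x,\lambda_0\rangle+\xi)\ge0\}$, $K_\Delta=\{\sigma\subset[m]:\bigcap_{i\in\sigma}H_i\ne\varnothing\}\cup\{\varnothing\}$, $K_\pm=\{\sigma\subset\widetilde{[m]}:\bigcap_{i\in\sigma}(H_i\cap\Delta_\pm)\ne\varnothing\}\cup\{\varnothing\}$. Simplicial-complex notation: for $Z\subset K$, $\overline Z$ is the smallest subcomplex containing $Z$; $O_K(Z)=\{\sigma\in K:\sigma\supseteq\tau$ for some $\tau\in Z\}$; $O_K(o)=O_K(\{\{o\}\})$; $\operatorname{Del}_Z(K)=K\setminus O_K(Z)$. A complex is pure if all maximal faces have the same dimension. Connected sum: for simplicial complexes $K_1,K_2$ on the same vertex set and $Z\subset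 K_1\cap K_2$ with $\varnothing\notin Z$ and $O_{K_1\cup K_2}(Z)\subset K_1\cap K_2$, $K_1\#^ZK_2:=\operatorname{Del}_Z(K_1\cup K_2)$. It is strong if $K_1,K_2,W:=K_1\cap K_2$ are pure of the same dimension and $Z=W\setminus\overline{K_1\setminus W}=W\setminus\overline{K_2\setminus W}$. *)

(* Defs.v *)
From HB Require Import structures.
From mathcomp Require Import all_boot all_order all_algebra.
From mathcomp Require Import boolp reals.
Set Implicit Arguments. Unset Strict Implicit. Unset Printing Implicit Defensive.
Import Order.TTheory GRing.Theory Num.Theory.
Local Open Scope ring_scope.

Section Complexes.
Variable V : finType.
Implicit Types K Z W : {set {set V}}.

Definition is_complex K := forall s t : {set V}, s \in K -> t \subset s -> t \in K.

Definition closure Z : {set {set V}} := [set t : {set V} | [exists s in Z, t \subset s]].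

Definition starO K Z : {set {set V}} := [set s in K | [exists t in Z, t \subset s]].

Definition starO_v K (o : V) : {set {set V}} := starO K [set [set o]].

Definition Del Z K : {set {set V}} := K :\: starO K Z.

Definition maximal_face K (s : {set V}) := s \in K /\ forall t : {set V}, t \in K -> s \subset t -> t = s.

(* all maximal faces have d vertices (i.e. dimension d-1) *)
Definition pure_of_card K (d : nat) := forall s : {set V}, maximal_face K s -> #|s| = d.

Definition connected_sum_defined K1 K2 Z :=
  [/\ is_complex K1, is_complex K2, Z \subset K1 :&: K2, set0 \notin Z
    & starO (K1 :|: K2) Z \subset K1 :&: K2].

Definition connected_sum K1 K2 Z : {set {set V}} := Del Z (K1 :|: K2).

Definition strong_connected_sum K1 K2 Z :=
  let W := K1 :&: K2 in
  [/\ connected_sum_defined K1 K2 Z,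
      exists d, [/\ pure_of_card K1 d, pure_of_card K2 d & pure_of_card W d],
      Z = W :\: closure (K1 :\: W)
    & Z = W :\: closure (K2 :\: W)].
End Complexes.

Section Geometry.
Variables (R : realType) (n : nat).

Definition dotv (x y : 'rV[R]_n) : R := \sum_(k < n) x ord0 k * y ord0 k.

Variables (m : nat) (lam : 'I_m -> 'rV[R]_n) (eta : 'I_m -> R).

Definition in_poly (x : 'rV[R]_n) : Prop := forall i, 0 <= dotv x (lam i) + eta i.

Definition on_facet (i : 'I_m) (x : 'rV[R]_n) : Prop :=
  in_poly x /\ dotv x (lam i) + eta i = 0.

Definition aff_indep k (p : 'I_k -> 'rV[R]_n) : Prop :=
  forall c : 'I_k -> R, \sum_j c j *: p j = 0 -> \sum_j c j = 0 -> forall j, c j = 0.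

Definition has_aff_indep (S : 'rV[R]_n -> Prop) k : Prop :=
  exists p : 'I_k -> 'rV[R]_n, (forall j, S (p j)) /\ aff_indep p.

(* S has affine dimension exactly n-1: n but not n+1 affinely independent points *)
Definition codim1 (S : 'rV[R]_n -> Prop) : Prop :=
  has_aff_indep S n /\ ~ has_aff_indep S n.+1.

Definition bounded_poly : Prop :=
  exists M : R, forall x, in_poly x -> forall k, `|x ord0 k| <= M.

Definition full_dim_poly : Prop :=
  exists (x : 'rV[R]_n) (e : R), 0 < e /\
    forall y : 'rV[R]_n, (forall k, `|y ord0 k - x ord0 k| < e) -> in_poly y.

Definition is_vertex (x : 'rV[R]_n) : Prop :=
  in_poly x /\ forall y z (t : R), in_poly y -> in_poly z -> 0 < t < 1 ->
    x = t *: y + (1 - t) *: z -> y = z.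

(* Delta is an n-dimensional simple polytope whose facets are exactly the
   (pairwise distinct, nonempty) H_i, i in [m]. *)
Definition simple_polytope : Prop :=
  [/\ bounded_poly /\ full_dim_poly,
      forall i, exists x, on_facet i x,
      forall i, codim1 (on_facet i),
      forall i j, i != j -> ~ (forall x, on_facet i x <-> on_facet j x)
    & forall x, is_vertex x -> #|[set i | `[< on_facet i x >]]| = n].

Variables (lam0 : 'rV[R]_n) (xi : R).

Definition cutf (x : 'rV[R]_n) : R := dotv x lam0 + xi.

(* normals indexed by [m]~ = option 'I_m, with o = None *)
Definition ext_normal (j : option 'I_m) : 'rV[R]_n :=
  if j is Some i then lam i else lam0.

(* generic cut: H_o nonempty, and at every point of H_o the normal of the
   cut together with the normals of the facets through that point are
   linearly independent (general position). *)
Definition generic_cut : Prop :=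
  (exists x, in_poly x /\ cutf x = 0) /\
  forall x, in_poly x -> cutf x = 0 ->
    let A := [set j : option 'I_m |
               if j is Some i then `[< on_facet i x >] else true] in
    forall c : option 'I_m -> R,
      \sum_(j in A) c j *: ext_normal j = 0 -> forall j, j \in A -> c j = 0.

(* x \in Delta_+ (b = true) or Delta_- (b = false) *)
Definition in_half (b : bool) (x : 'rV[R]_n) : Prop :=
  in_poly x /\ (if b then 0 <= cutf x else cutf x <= 0).

(* K_Delta, as a complex on [m]~ not using the vertex o *)
Definition K_Delta : {set {set option 'I_m}} :=
  [set s : {set option 'I_m} | (None \notin s) &&
     `[< s = set0 \/ exists x, in_poly x /\ forall i, Some i \in s -> on_facet i x >]].

(* K_+ (b = true), K_- (b = false); H_o = cut hyperplane \cap Delta *)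
Definition K_half (b : bool) : {set {set option 'I_m}} :=
  [set s : {set option 'I_m} | `[< s = set0 \/ exists x, in_half b x /\
      forall j, j \in s -> if j is Some i then on_facet i x else cutf x = 0 >]].
End Geometry.

(* Main.v *)
Require Import Defs.
From HB Require Import structures.
From mathcomp Require Import all_boot all_order all_algebra.
From mathcomp Require Import boolp reals.
From mathcomp Require Import ring lra zify.
Set Implicit Arguments. Unset Strict Implicit. Unset Printing Implicit Defensive.
Import Order.TTheory GRing.Theory Num.Theory.
Local Open Scope ring_scope.

Section Dot.
Variables (R : realType) (n : nat).
Implicit Types x y z : 'rV[R]_n.

Lemma dotvDl x y z : dotv (x + y) z = dotv x z + dotv y z.
Proof. by rewrite /dotv -big_split; apply: eq_bigr => k _; rewrite mxE mulrDl. Qed.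
Lemma dotvZl (t : R) x z : dotv (t *: x) z = t * dotv x z.
Proof. by rewrite /dotv mulr_sumr; apply: eq_bigr => k _; rewrite mxE mulrA. Qed.
Lemma dotvNl x z : dotv (- x) z = - dotv x z.
Proof. by rewrite /dotv -sumrN; apply: eq_bigr => k _; rewrite mxE mulNr. Qed.
Lemma dotvBl x y z : dotv (x - y) z = dotv x z - dotv y z.
Proof. by rewrite dotvDl dotvNl. Qed.
Lemma dotvC x y : dotv x y = dotv y x.
Proof. by rewrite /dotv; apply: eq_bigr => k _; rewrite mulrC. Qed.
Lemma dotvZr (t : R) x z : dotv z (t *: x) = t * dotv z x.
Proof. by rewrite dotvC dotvZl dotvC. Qed.
Lemma dotvNr x z : dotv z (- x) = - dotv z x.
Proof. by rewrite dotvC dotvNl dotvC. Qed.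
Lemma dotv0l z : dotv 0 z = 0.
Proof. by rewrite /dotv big1 // => k _; rewrite mxE mul0r. Qed.
End Dot.

Section Walk.
Variables (R : realType) (n : nat) (J : finType) (a : J -> 'rV[R]_n) (b : J -> R).

Definition gQ j (x : 'rV[R]_n) := dotv x (a j) + b j.
Definition inQ x := forall j, 0 <= gQ j x.
Definition actQ x : {set J} := [set j | gQ j x == 0].
Definition spans (S : {set J}) :=
  forall d : 'rV[R]_n, (forall j, j \in S -> dotv d (a j) = 0) -> d = 0.
Definition boundedQ := exists M : R, forall x, inQ x -> forall k, `|x ord0 k| <= M.

Lemma gQ_step j x d t : gQ j (x + t *: d) = gQ j x + t * dotv d (a j).
Proof. by rewrite /gQ dotvDl dotvZl addrAC. Qed.

Lemma small_step x d : inQ x -> (forall j, j \in actQ x -> 0 <= dotv d (a j)) ->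
  exists2 t, 0 < t & inQ (x + t *: d).
Proof.
move=> hx hd.
have mono : forall j t1 t2, 0 < t1 -> t1 <= t2 -> 0 <= gQ j (x + t2 *: d) ->
    0 <= gQ j (x + t1 *: d).
  move=> j t1 t2 t10 t12; rewrite !gQ_step.
  have := hx j; set g := gQ j x; set e := dotv d (a j) => g0.
  case: (lerP 0 e) => he h2; first by nra.
  by nra.
have key : forall s : seq J, exists2 t, 0 < t & forall j, j \in s -> 0 <= gQ j (x + t *: d).
  elim=> [|j s [t t0 ht]]; first by exists 1.
  have [t' t'0 ht'] : exists2 t', 0 < t' & 0 <= gQ j (x + t' *: d).
    case: (lerP 0 (dotv d (a j))) => h.
      by exists 1 => //; rewrite gQ_step mul1r addr_ge0.
    have gpos : 0 < gQ j x.
      rewrite lt_neqAle hx andbT eq_sym; apply/negP => /eqP g0.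
      have := hd j; rewrite inE g0 eqxx => /(_ isT); rewrite leNgt h.  done.
    exists (gQ j x / (- dotv d (a j))); first by rewrite divr_gt0 // oppr_gt0.
    rewrite gQ_step.
    have -> : gQ j x / - dotv d (a j) * dotv d (a j) = - gQ j x.
      field; by rewrite ?oppr_eq0 lt_eqF.
    by rewrite subrr.
  exists (Num.min t t'); first by rewrite lt_min t0 t'0.
  move=> i; rewrite inE => /orP [/eqP -> | /ht hi].
    by apply: (mono j _ t') => //; [rewrite lt_min t0 t'0 | rewrite ge_min lexx orbT].
  by apply: (mono i _ t) => //; [rewrite lt_min t0 t'0 | rewrite ge_min lexx].
have [t t0 ht] := key (enum J).
by exists t => // j; apply: ht; rewrite mem_enum.
Qed.

Lemma walk_step (bnd : boundedQ) x d c : inQ x -> d != 0 ->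
  (forall j, j \in actQ x -> dotv d (a j) = 0) -> 0 <= dotv d c ->
  exists y, [/\ inQ y, actQ x \proper actQ y & dotv x c <= dotv y c].
Proof.
move=> hx dn0 hd hc.
have [j0 Pj0] : exists j0, dotv d (a j0) < 0.
  apply: contrapT => hno.
  have hall : forall j, 0 <= dotv d (a j).
    move=> j; rewrite leNgt; apply/negP => hj; apply: hno; by exists j.
  have [k dk] : exists k, d ord0 k != 0.
    apply/existsP; apply: contraNT dn0 => /existsPn h; apply/eqP/rowP => k.
    by have := h k; rewrite negbK mxE => /eqP.
  have [M hM] := bnd.
  have M0 : `|x ord0 k| <= M by apply: hM.
  have dkp : 0 < `|d ord0 k| by rewrite normr_gt0.
  pose t := (M + `|x ord0 k| + 1) / `|d ord0 k|.
  have t0 : 0 <= t.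
    apply: divr_ge0; last exact: normr_ge0.
    have := normr_ge0 (x ord0 k); lra.
  have hin : inQ (x + t *: d).
    by move=> j; rewrite gQ_step; apply: addr_ge0; [apply: hx | apply: mulr_ge0].
  have := hM _ hin k; rewrite !mxE.
  have e1 : `|t * d ord0 k| = M + `|x ord0 k| + 1.
    rewrite normrM ger0_norm // /t mulrAC -mulrA mulfV ?mulr1 //.
    by rewrite lt0r_neq0.
  have := ler_normB (x ord0 k + t * d ord0 k) (x ord0 k).
  rewrite addrAC subrr add0r e1 => h1 h2.
  have := normr_ge0 (x ord0 k); lra.
pose P := fun j => dotv d (a j) < 0.
pose F := fun j => gQ j x / (- dotv d (a j)).
case: (@arg_minP _ _ _ j0 P F Pj0) => jm Pjm minjm.
have Fjm0 : 0 <= F jm by rewrite /F divr_ge0 ?hx // oppr_ge0 ltW.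
exists (x + F jm *: d); split.
- move=> j; rewrite gQ_step.
  case: (lerP 0 (dotv d (a j))) => hj.
    by apply: addr_ge0; [apply: hx | apply: mulr_ge0].
  have := minjm j hj; rewrite /F ler_pdivlMr ?oppr_gt0 // => h.
  have := hx j; set u := gQ jm x / - dotv d (a jm) in h *; nra.
- apply/properP; split.
    apply/subsetP => j; rewrite !inE gQ_step => /eqP hj.
    by rewrite hd ?inE ?hj // mulr0 addr0.
  exists jm.
    rewrite inE gQ_step /F; apply/eqP; field.
    by rewrite ?oppr_eq0 lt_eqF.
  rewrite inE; apply/negP => /eqP g0.
  have := hd jm; rewrite inE g0 eqxx => /(_ isT) h.
  by move: Pjm; rewrite /P h ltxx.
- rewrite dotvDl dotvZl; have := mulr_ge0 Fjm0 hc; lra.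
Qed.

Lemma walk (bnd : boundedQ) c x : inQ x ->
  exists y, [/\ inQ y, actQ x \subset actQ y, dotv x c <= dotv y c & spans (actQ y)].
Proof.
move=> hx.
suff : forall N x, inQ x -> (#|J| - #|actQ x| < N)%N ->
  exists y, [/\ inQ y, actQ x \subset actQ y, dotv x c <= dotv y c & spans (actQ y)].
  by move=> /(_ (#|J| - #|actQ x|).+1 x hx (ltnSn _)).
elim=> [|N IH] {}x {}hx hN; first by [].
case: (pselect (exists d, (forall j, j \in actQ x -> dotv d (a j) = 0) /\ d != 0)).
  move=> [d [hd dn0]].
  have [d' [hd' dn0' hc']] : exists d', [/\ (forall j, j \in actQ x -> dotv d' (a j) = 0),
      d' != 0 & 0 <= dotv d' c].
    case: (lerP 0 (dotv d c)) => h; first by exists d.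
    exists (- d); split; last by rewrite dotvNl oppr_ge0 ltW.
      by move=> j /hd; rewrite dotvNl => ->; rewrite oppr0.
    by rewrite oppr_eq0.
  have [y [hy py cy]] := walk_step bnd hx dn0' hd' hc'.
  have [z [hz sz cz spz]] : exists z, [/\ inQ z, actQ y \subset actQ z,
      dotv y c <= dotv z c & spans (actQ z)].
    apply: IH => //.
    have h1 := proper_card py; have h2 : (#|actQ y| <= #|J|)%N := max_card _.
    move: hN; lia.
  exists z; split => //; last by apply: le_trans cz.
  by apply: subset_trans (proper_sub py) sz.
move=> hno; exists x; split => //.
move=> d hd; case: (eqVneq d 0) => // hne; exfalso; apply: hno; by exists d.
Qed.

End Walk.
Section Lin.
Variables (R : realType) (n : nat).

Lemma indep_row_free k (v : 'I_k -> 'rV[R]_n) :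
  (forall c : 'I_k -> R, \sum_j c j *: v j = 0 -> forall j, c j = 0) ->
  row_free (\matrix_(j < k) v j).
Proof.
move=> hind; rewrite -kermx_eq0; apply/rowV0P => u /sub_kermxP hu.
move: hu; rewrite mulmx_sum_row => hu.
apply/rowP => j; rewrite mxE.
apply: (hind (fun j => u ord0 j)); rewrite -[RHS]hu.
by apply: eq_bigr => i _; rewrite rowK.
Qed.

Lemma span_row_free k (v : 'I_k -> 'rV[R]_n) :
  (forall d, (forall j, dotv d (v j) = 0) -> d = 0) ->
  row_free (\matrix_(j < k) v j)^T.
Proof.
move=> hsp; rewrite -kermx_eq0; apply/rowV0P => u /sub_kermxP hu.
apply: hsp => j.
have := congr1 (fun M : 'M[R]_(1, k) => M ord0 j) hu; rewrite !mxE => <-.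
by rewrite /dotv; apply: eq_bigr => l _; rewrite !mxE.
Qed.

Lemma card_basis k (v : 'I_k -> 'rV[R]_n) :
  (forall c : 'I_k -> R, \sum_j c j *: v j = 0 -> forall j, c j = 0) ->
  (forall d, (forall j, dotv d (v j) = 0) -> d = 0) -> k = n.
Proof.
move=> hi hs.
have /eqP h1 := indep_row_free hi.
have /eqP h2 := span_row_free hs.
by rewrite -h1 -mxrank_tr h2.
Qed.

Lemma solve_dual k (v : 'I_k -> 'rV[R]_n) j0 :
  (forall c : 'I_k -> R, \sum_j c j *: v j = 0 -> forall j, c j = 0) ->
  exists d, forall j, dotv d (v j) = (j == j0)%:R.
Proof.
move=> /indep_row_free /row_freeP [B hB].
exists (col j0 B)^T => j.
have := congr1 (fun M : 'M[R]_k => M j j0) hB; rewrite !mxE => <-.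
by rewrite /dotv; apply: eq_bigr => l _; rewrite !mxE mulrC.
Qed.

Section SetV.
Variables (J : finType) (A : {set J}) (v : J -> 'rV[R]_n).
Definition indep_set := forall c : J -> R,
  \sum_(j in A) c j *: v j = 0 -> forall j, j \in A -> c j = 0.
Definition spans_set := forall d, (forall j, j \in A -> dotv d (v j) = 0) -> d = 0.

Lemma indep_enum : indep_set ->
  forall c : 'I_#|A| -> R, \sum_j c j *: v (enum_val j) = 0 -> forall j, c j = 0.
Proof.
move=> hi c hc k0.
have x0A : enum_val k0 \in A := enum_valP k0.
pose c' j := c (enum_rank_in x0A j).
have e : \sum_(j in A) c' j *: v j = \sum_k c k *: v (enum_val k).
  by rewrite big_enum_val; apply: eq_bigr => k _; rewrite /c' enum_valK_in.
have := hi c'; rewrite e => /(_ hc (enum_val k0) x0A).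
by rewrite /c' enum_valK_in.
Qed.

Lemma card_basis_set : indep_set -> spans_set -> #|A| = n.
Proof.
move=> hi hs; apply: (card_basis (v := fun k => v (enum_val k))).
  exact: indep_enum.
move=> d hd; apply: hs => j jA.
by rewrite -(enum_rankK_in jA jA); apply: hd.
Qed.

Lemma solve_dual_set j0 : indep_set -> j0 \in A ->
  exists d, forall j, j \in A -> dotv d (v j) = (j == j0)%:R.
Proof.
move=> hi j0A.
have [d hd] := solve_dual (v := fun k => v (enum_val k)) (enum_rank_in j0A j0) (indep_enum hi).
exists d => j jA.
rewrite -(enum_rankK_in jA jA) hd.
congr (_ %:R); congr (nat_of_bool _); apply/idP/idP => /eqP h; apply/eqP.
  by rewrite h enum_rankK_in.
by apply: enum_val_inj; rewrite h enum_rankK_in.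
Qed.
End SetV.
End Lin.
Section Geo.
Variables (R : realType) (n m : nat) (lam : 'I_m -> 'rV[R]_n) (eta : 'I_m -> R)
  (lam0 : 'rV[R]_n) (xi : R).

Definition sg (b : bool) : R := if b then 1 else -1.
Definition ab (b : bool) (j : option 'I_m) : 'rV[R]_n :=
  if j is Some i then lam i else sg b *: lam0.
Definition bb (b : bool) (j : option 'I_m) : R :=
  if j is Some i then eta i else sg b * xi.

Local Notation cut := (cutf lam0 xi).
Local Notation Kh := (K_half lam eta lam0 xi).
Definition onall (s : {set option 'I_m}) (x : 'rV[R]_n) :=
  forall j, j \in s -> if j is Some i then on_facet lam eta i x else cut x = 0.

Lemma sg2 b : sg b * sg b = 1.
Proof. by case: b; rewrite /sg ?mulr1 ?mulrNN ?mulr1. Qed.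
Lemma sg_neq0 b : sg b != 0.
Proof. by case: b; rewrite /sg ?oppr_eq0 oner_eq0. Qed.

Lemma gQ_None b x : gQ (ab b) (bb b) None x = sg b * cut x.
Proof. by rewrite /gQ /= dotvZr /cutf mulrDr. Qed.

Lemma in_halfE b x : in_half lam eta lam0 xi b x <-> inQ (ab b) (bb b) x.
Proof.
split.
  move=> [hp hc] [i|]; first exact: hp.
  rewrite gQ_None; case: b hc => /= hc; rewrite /sg ?mul1r //.
  by rewrite mulN1r oppr_ge0.
move=> h; split; first by move=> i; apply: (h (Some i)).
have := h None; rewrite gQ_None; clear h; case: b => /=; rewrite /sg ?mul1r //.
by rewrite mulN1r oppr_ge0.
Qed.

Lemma in_half_poly b x : in_half lam eta lam0 xi b x -> in_poly lam eta x.
Proof. by case. Qed.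

Lemma in_half_cut0 b x : in_poly lam eta x -> cut x = 0 -> in_half lam eta lam0 xi b x.
Proof. by move=> hp hc; split => //; case: b; rewrite hc. Qed.

Lemma onall_act b x s : in_half lam eta lam0 xi b x ->
  onall s x <-> (forall j, j \in s -> j \in actQ (ab b) (bb b) x).
Proof.
move=> hx; split => h j /h; case: j => [i|] /=; rewrite inE.
- by case => _; rewrite /gQ /= => ->; rewrite eqxx.
- by rewrite gQ_None => ->; rewrite mulr0 eqxx.
- by rewrite /gQ /= => /eqP hg; split => //; case: hx.
- by rewrite gQ_None mulf_eq0 (negbTE (sg_neq0 b)) /= => /eqP.
Qed.

Lemma KhP b s : s \in Kh b <-> (s = set0 \/ exists x, in_half lam eta lam0 xi b x /\ onall s x).
Proof. by rewrite inE; split => [/asboolP | h]; [|apply/asboolP]. Qed.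

Lemma Kh_complex b : is_complex (Kh b).
Proof.
move=> s t /KhP [-> | [x [hx ha]]] ts; apply/KhP.
  by left; apply/eqP; rewrite -subset0.
by right; exists x; split => // j /(subsetP ts) /ha.
Qed.

Lemma Kh_None b (b' : bool) (s : {set option 'I_m}) : None \in s -> s \in Kh b -> s \in Kh b'.
Proof.
move=> hN /KhP [s0 | [x [hx ha]]]; first by rewrite s0 inE in hN.
apply/KhP; right; exists x; split => //.
by apply: in_half_cut0 (in_half_poly hx) (ha None hN).
Qed.

Lemma aff_comb (t : R) (u w v : 'rV[R]_n) (e : R) :
  dotv (t *: u + (1 - t) *: w) v + e = t * (dotv u v + e) + (1 - t) * (dotv w v + e).
Proof. rewrite dotvDl !dotvZl; ring. Qed.

Lemma cut_comb (t : R) (u w : 'rV[R]_n) : cut (t *: u + (1 - t) *: w) = t * cut u + (1 - t) * cut w.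
Proof. exact: aff_comb. Qed.

Lemma Kh_addNone (hG : generic_cut lam eta lam0 xi) (s : {set option 'I_m}) :
  s \in Kh true -> s \in Kh false -> None |: s \in Kh true.
Proof.
move=> /KhP [-> | [u [hu hau]]] hs.
  have [[x0 [hx0 hc0]] _] := hG.
  apply/KhP; right; exists x0; split; first exact: in_half_cut0.
  by move=> j; rewrite setU0 inE => /eqP ->.
move: hs => /KhP [s0 | [w [hw haw]]].
  have [[x0 [hx0 hc0]] _] := hG.
  apply/KhP; right; exists x0; split; first exact: in_half_cut0.
  by move=> j; rewrite s0 setU0 inE => /eqP ->.
have [hpu hcu] := hu; have [hpw hcw] := hw.
rewrite /= in hcu hcw.
pose z := if cut u == 0 then u else
  let t := - cut w / (cut u - cut w) in t *: u + (1 - t) *: w.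
have [t [t0 t1 ez]] : exists t, [/\ 0 <= t, t <= 1 & z = t *: u + (1 - t) *: w].
  rewrite /z; case: eqP => hu0.
    by exists 1; rewrite subrr scale0r addr0 scale1r ler01 lexx.
  have hd : 0 < cut u - cut w.
    have : 0 < cut u by rewrite lt_neqAle eq_sym; apply/andP; split => //; apply/eqP.
    lra.
  exists (- cut w / (cut u - cut w)); split => //.
    by apply: divr_ge0; [lra | exact: ltW].
  by rewrite ler_pdivrMr // mul1r; lra.
have hz : cut z = 0.
  rewrite /z; case: eqP => // hu0 /=; rewrite cut_comb.
  have hd : cut u - cut w != 0.
    have : 0 < cut u by rewrite lt_neqAle eq_sym; apply/andP; split => //; apply/eqP.
    move=> h; rewrite lt0r_neq0 //; lra.
  by field.
have hpz : in_poly lam eta z.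
  move=> i; rewrite ez aff_comb.
  have := hpu i; have := hpw i; nra.
apply/KhP; right; exists z; split; first exact: in_half_cut0.
move=> j /setU1P [-> // | js].
have := hau j js; have := haw j js; case: j js => [i|] js //=.
move=> [_ hw0] [_ hu0]; split => //.
by rewrite ez aff_comb hw0 hu0 !mulr0 addr0.
Qed.

End Geo.
Arguments sg {R} b.
Arguments sg2 {R} b.
Arguments sg_neq0 {R} b.
Section Geo2.
Variables (R : realType) (n m : nat) (lam : 'I_m -> 'rV[R]_n) (eta : 'I_m -> R)
  (lam0 : 'rV[R]_n) (xi : R).
Local Notation cut := (cutf lam0 xi).
Local Notation Kh := (K_half lam eta lam0 xi).
Local Notation ab := (ab lam lam0).
Local Notation bb := (bb eta xi).

Lemma bnd_poly (hP : simple_polytope lam eta) : boundedQ lam eta.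
Proof. by case: hP => [[[M hM] _] _ _ _ _]; exists M. Qed.

Lemma bnd_half (hP : simple_polytope lam eta) b : boundedQ (ab b) (bb b).
Proof.
have [M hM] := bnd_poly hP; exists M => x /in_halfE hx.
by apply: hM; apply: in_half_poly hx.
Qed.

Lemma genA (hG : generic_cut lam eta lam0 xi) x : in_poly lam eta x -> cut x = 0 ->
  indep_set [set j : option 'I_m | if j is Some i then `[< on_facet lam eta i x >] else true]
    (ext_normal lam lam0).
Proof. by case: hG => _ h hp hc; apply: h. Qed.

Lemma sg_pos b (c : R) : 0 < sg b * c -> (if b then 0 <= c else c <= 0).
Proof. by case: b; rewrite /sg ?mul1r ?mulN1r => h; lra. Qed.
Lemma sg_neg b (c : R) : (if ~~ b then 0 <= c else c <= 0) -> sg b * c <= 0.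
Proof. by case: b; rewrite /sg ?mul1r ?mulN1r /= => h; lra. Qed.

Lemma F5 (hP : simple_polytope lam eta) (hG : generic_cut lam eta lam0 xi)
  (s : {set option 'I_m}) (b : bool) :
  s \in Kh true -> s \in Kh false -> None \notin s ->
  exists t, [/\ t \in Kh b, t \notin Kh (~~ b) & s \subset t].
Proof.
move=> sp sm sN.
have := Kh_addNone hG sp sm => /KhP [/eqP | [x0 [hx0 ha0]]].
  by rewrite -subset0 => /subsetP /(_ None (setU11 _ _)); rewrite inE.
have hp0 := in_half_poly hx0.
have hc0 : cut x0 = 0 by apply: (ha0 None (setU11 _ _)).
set A := [set j : option 'I_m | if j is Some i then `[< on_facet lam eta i x0 >] else true].
have hind := genA hG hp0 hc0.
have j0A : None \in A by rewrite inE.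
have [d hd] := solve_dual_set hind j0A.
have dl0 : dotv d lam0 = 1 by rewrite (hd None) ?inE.
have dli : forall i, i \in actQ lam eta x0 -> dotv d (lam i) = 0.
  move=> i; rewrite inE => /eqP hi.
  rewrite (hd (Some i)) //; rewrite inE; apply/asboolP; split => //.
have hstep : forall i, i \in actQ lam eta x0 -> 0 <= dotv (sg b *: d) (lam i).
  by move=> i hi; rewrite dotvZl dli // mulr0.
have [t t0 ht] := small_step hp0 hstep.
set x1 := x0 + t *: (sg b *: d) in ht.
have a01 : actQ lam eta x0 \subset actQ lam eta x1.
  apply/subsetP => i hi; move: (hi); rewrite !inE gQ_step dotvZl dli // mulr0 mulr0 addr0.
  done.
have c1 : sg b * cut x1 = t.
  rewrite /cutf dotvDl !dotvZl dl0 mulr1 /cutf in hc0 *.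
  have := sg2 b; move: hc0; set q := sg b; set p := dotv x0 lam0 => hc0 h2.
  have -> : q * (p + t * q + xi) = q * (p + xi) + t * (q * q) by ring.
  by rewrite hc0 mulr0 h2 mulr1 add0r.
have [y [hy a1y cy spy]] := walk (bnd_poly hP) (sg b *: lam0) ht.
have cy' : 0 < sg b * cut y.
  move: cy; rewrite !dotvZr => cy.
  have : sg b * cut y = sg b * dotv y lam0 + sg b * xi by rewrite mulrDr.
  have : sg b * cut x1 = sg b * dotv x1 lam0 + sg b * xi by rewrite mulrDr.
  lra.
have hyb : in_half lam eta lam0 xi b y.
  by split => //; apply: sg_pos.
exists [set Some i | i in actQ lam eta y]; split.
- apply/KhP; right; exists y; split => // j /imsetP [i hi ->].
  by split => //; move: hi; rewrite inE => /eqP.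
- apply/negP => /KhP [e0 | [z [hz haz]]].
    have d0 : d = 0.
      apply: spy => i hi; exfalso.
      by move: e0 => /eqP; rewrite -subset0 => /subsetP /(_ (Some i)); rewrite mem_imset //; [move=>/(_ hi); rewrite inE | move=> ? ? [] ].
    by move: dl0; rewrite d0 dotv0l => /eqP; rewrite eq_sym oner_eq0.
  have zy : z = y.
    apply/eqP; rewrite -subr_eq0; apply/eqP; apply: spy => i hi.
    have := haz (Some i); rewrite mem_imset; last by move=> ? ? [].
    move=> /(_ hi) [_ hzi]; move: hi; rewrite inE /gQ => /eqP hyi.
    by rewrite dotvBl; lra.
  move: hz cy'; rewrite zy => -[_] /sg_neg h1 h2; lra.
- apply/subsetP => j js; move: (js); case: j js => [i|] js; last by rewrite (negbTE sN).
  move=> _; rewrite mem_imset; last by move=> ? ? [].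
  apply: (subsetP a1y); apply: (subsetP a01).
  have := ha0 (Some i); rewrite inE js orbT => /(_ isT) [_ h].
  by rewrite inE; apply/eqP.
Qed.

End Geo2.
Section Geo3.
Variables (R : realType) (n m : nat) (lam : 'I_m -> 'rV[R]_n) (eta : 'I_m -> R)
  (lam0 : 'rV[R]_n) (xi : R).
Local Notation cut := (cutf lam0 xi).
Local Notation Kh := (K_half lam eta lam0 xi).
Local Notation ab := (ab lam lam0).
Local Notation bb := (bb eta xi).

Lemma F6 (hP : simple_polytope lam eta) (hG : generic_cut lam eta lam0 xi)
  (b : bool) (s : {set option 'I_m}) : maximal_face (Kh b) s -> #|s| = n.
Proof.
move=> [sK smax].
have [x [hx hax]] : exists x, in_half lam eta lam0 xi b x /\ onall lam eta lam0 xi s x.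
  case/KhP: sK => [s0 | h]; last done.
  have [[x0 [hx0 hc0]] _] := hG.
  exists x0; split; first exact: in_half_cut0.
  by move=> j; rewrite s0 inE.
have hxQ := (in_halfE _ _ _ _ _ _).1 hx.
have sact := (@onall_act _ _ _ lam eta lam0 xi b x s hx).1 hax.
have [y [hyQ axy _ spy]] := walk (bnd_half lam0 xi hP b) 0 hxQ.
have hy := (in_halfE _ _ _ _ _ _).2 hyQ.
set S := actQ (ab b) (bb b) y in axy spy *.
have SK : S \in Kh b.
  by apply/KhP; right; exists y; split => //; apply/(@onall_act _ _ _ lam eta lam0 xi b y S hy).
have sS : s \subset S by apply/subsetP => j /sact /(subsetP axy).
have eS : S = s := smax S SK sS.
rewrite -eS.
have hpy := in_half_poly hy.
case: (boolP (None \in S)) => hN.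
  have hcy : cut y = 0 by apply: ((@onall_act _ _ _ lam eta lam0 xi b y S hy).2 (fun j h => h) None hN).
  have hind := genA hG hpy hcy.
  have eA : [set j : option 'I_m | if j is Some i then `[< on_facet lam eta i y >] else true] = S.
    apply/setP => -[i|]; last by move: hN; rewrite !inE => ->.
    rewrite !inE /gQ /=; apply/asboolP/idP => [[_ ->] // | /eqP h].
    by split.
  rewrite -eA; apply: card_basis_set hind _.
  move=> d hd; apply: spy => -[i|] hi.
    by have := hd (Some i); rewrite eA => /(_ hi).
  by rewrite /= dotvZr (hd None) ?mulr0 // inE.
have hv : is_vertex lam eta y.
  split => // u w t hu hw /andP [t0 t1] ey.
  apply/eqP; rewrite -subr_eq0; apply/eqP; apply: spy => -[i|] hi; last by rewrite hi in hN.
  move: hi; rewrite inE /gQ /= ey aff_comb => /eqP h.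
  have gu := hu i; have gw := hw i.
  set p := dotv u (lam i) + eta i in gu h; set q := dotv w (lam i) + eta i in gw h.
  have e1 : t * p = 0.
    have := mulr_ge0 (ltW t0) gu; have : 0 <= 1 - t by lra.
    move/mulr_ge0 => /(_ _ gw) h2 h3; lra.
  have e2 : (1 - t) * q = 0 by lra.
  have p0 : p = 0 by move/eqP: e1; rewrite mulf_eq0 (gt_eqF t0) => /eqP.
  have q0 : q = 0.
    by move/eqP: e2; rewrite mulf_eq0 subr_eq0 => /orP [/eqP h4|/eqP //]; move: t1; rewrite -h4 ltxx.
  rewrite dotvBl; move: p0 q0; rewrite /p /q; lra.
case: hP => _ _ _ _ /(_ y hv) hcard.
have eS2 : S = [set Some i | i in [set i | `[< on_facet lam eta i y >]]].
  apply/setP => -[i|]; last first.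
    by rewrite (negbTE hN); symmetry; apply/imsetP => -[? ? []].
  rewrite mem_imset; last by move=> ? ? [].
  rewrite !inE /gQ /=; apply/idP/asboolP => [/eqP h | [_ ->] //].
  by split.
by rewrite eS2 card_imset // => ? ? [].
Qed.

End Geo3.
Lemma starO_vP (V : finType) (K : {set {set V}}) (o : V) (s : {set V}) :
  (s \in starO_v K o) = (s \in K) && (o \in s).
Proof.
rewrite inE; congr (_ && _); apply/existsP/idP => [[t /andP [/set1P -> ]]| h].
  by rewrite sub1set.
by exists [set o]; rewrite set11 sub1set.
Qed.

Lemma closureP (V : finType) (K : {set {set V}}) (s : {set V}) :
  reflect (exists2 t, t \in K & s \subset t) (s \in Defs.closure K).
Proof.
rewrite inE; apply: (iffP existsP) => [[t /andP [h1 h2]] | [t h1 h2]]; exists t => //.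
by rewrite h1.
Qed.

Theorem theorem3p9 (R : realType) (n m : nat)
    (lam : 'I_m -> 'rV[R]_n) (eta : 'I_m -> R) (lam0 : 'rV[R]_n) (xi : R) :
  simple_polytope lam eta ->
  generic_cut lam eta lam0 xi ->
  let Kp := K_half lam eta lam0 xi true in
  let Km := K_half lam eta lam0 xi false in
  let Z := starO_v (Kp :|: Km) None in
  strong_connected_sum Kp Km Z /\ K_Delta lam eta = connected_sum Kp Km Z.
Proof.
move=> hP hG Kp Km Z.
pose Kh := K_half lam eta lam0 xi.
have hZ : forall s : {set option 'I_m}, (s \in Z) = (s \in Kp :|: Km) && (None \in s).
  by move=> s; rewrite starO_vP.
have bothN : forall (s : {set option 'I_m}) b, None \in s -> s \in Kh b -> (s \in Kp) && (s \in Km).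
  by move=> s b hN hs; rewrite (Kh_None true hN hs) (Kh_None false hN hs).
have bothU : forall s : {set option 'I_m}, None \in s -> s \in Kp :|: Km -> (s \in Kp) && (s \in Km).
  by move=> s hN; rewrite inE => /orP [] /(bothN _ _ hN).
have [[x0 [hx0 hc0]] _] := hG.
have oK : [set None] \in Kp.
  apply/KhP; right; exists x0; split; first exact: in_half_cut0.
  by move=> j /set1P ->.
have oZ : [set None] \in Z by rewrite hZ inE oK set11.
have eqZ : forall b, Z = (Kp :&: Km) :\: Defs.closure (Kh b :\: (Kp :&: Km)).
  move=> b; apply/setP => s; rewrite in_setD.
  apply/idP/idP.
    rewrite hZ => /andP [sU sN].
    have sW : s \in Kp :&: Km by rewrite inE bothU.
    rewrite sW andbT; apply/closureP => -[t]; rewrite inE => /andP [tW tK] st.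
    have tN : None \in t by apply: (subsetP st).
    by move: tW; rewrite inE (bothN _ _ tN tK).
  move=> /andP [sC sW]; rewrite hZ.
  have [sp sm] : s \in Kp /\ s \in Km by move: sW; rewrite inE => /andP.
  rewrite inE sp /=.
  apply/negPn/negP => sN.
  have [t [tK tK' st]] := @F5 _ _ _ lam eta lam0 xi hP hG s b sp sm sN.
  move/negP: sC; apply; apply/closureP; exists t => //.
  rewrite inE tK andbT inE; apply/negP => /andP [h1 h2].
  by case: b tK' {tK} => /=; rewrite ?h1 ?h2.
split.
  rewrite /strong_connected_sum; split.
  - split.
    + exact: Kh_complex.
    + exact: Kh_complex.
    + by apply/subsetP => s; rewrite hZ => /andP [sU sN]; rewrite inE bothU.
    + by rewrite hZ in_set0 andbF.
    + apply/subsetP => s; rewrite in_set => /andP [sU /existsP [t /andP [tZ ts]]].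
      move: tZ; rewrite hZ => /andP [_ tN].
      by rewrite inE bothU //; apply: (subsetP ts).
  - exists n; split.
    + by move=> s hs; apply: (@F6 _ _ _ lam eta lam0 xi hP hG true).
    + by move=> s hs; apply: (@F6 _ _ _ lam eta lam0 xi hP hG false).
    + move=> s [sW smax].
      have [sp sm] : s \in Kp /\ s \in Km by move: sW; rewrite inE => /andP.
      have hp := Kh_addNone hG sp sm.
      have hW : None |: s \in Kp :&: Km by rewrite inE (bothN _ _ (setU11 _ _) hp).
      have sN : None \in s by rewrite -(smax _ hW (subsetUr _ _)) setU11.
      apply: (@F6 _ _ _ lam eta lam0 xi hP hG true); split => // t tK st.
      apply: smax => //; rewrite inE (bothN _ _ (subsetP st _ sN) tK) //.
  - exact: (eqZ true).
  - exact: (eqZ false).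
apply/setP => s.
rewrite /connected_sum /Del in_setD.
have starE : (s \in starO (Kp :|: Km) Z) = (s \in Kp :|: Km) && (None \in s).
  rewrite in_set; congr (_ && _); apply/existsP/idP => [[t /andP [tZ ts]] | sN].
    by move: tZ; rewrite hZ => /andP [_ tN]; apply: (subsetP ts).
  by exists [set None]; rewrite oZ sub1set.
rewrite starE /K_Delta in_set.
apply/andP/idP.
  move=> [sN /asboolP hs].
  case: hs => [s0 | [x [hx hs]]].
    rewrite s0 in_set0 andbF /= in_setU; apply/orP; left.
    by apply/KhP; left.
  have hon : forall b, in_half lam eta lam0 xi b x -> s \in Kh b.
    move=> b hb; apply/KhP; right; exists x; split => // -[i|] js.
      exact: hs.
    by rewrite js in sN.
  rewrite (negbTE sN) andbF /= in_setU.
  case: (lerP 0 (cutf lam0 xi x)) => hc.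
    by rewrite (hon true) //; split.
  by rewrite (hon false) ?orbT //; split => //; apply: ltW.
rewrite negb_and => /andP [/orP [h|sN] sU]; first by rewrite sU in h.
split => //; apply/asboolP.
have [b sb] : exists b, s \in Kh b by move: sU; rewrite inE => /orP [h|h]; [exists true|exists false].
case/KhP: sb => [s0 | [x [hx hs]]]; [by left | right].
exists x; split; first exact: (in_half_poly hx).
by move=> i /hs.
Qed.
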